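(* Let $(X,u)$ and $(Y,v)$ be Čech closure spaces, let $Y^X$ be the set of all continuous maps $(X,u)\to(Y,v)$, let $(f_\lambda)_{\lambda\in\Lambda}$ be a net in $Y^X$ and $f\in Y^X$. Then $(f_\lambda)$ converges continuously to $f$ if and only if $$\overline{\lim_{\Lambda}}\, f_\lambda^{-1}(B)\subset f^{-1}(v(B))\quad\text{for every subset } B\subset Y.$$
   Context: A Čech closure space $(X,u)$ is a set $X$ with an operator $u:\mathcal P(X)\to\mathcal P(X)$ satisfying $u(\emptyset)=\emptyset$, $A\subset u(A)$, and $u(A\cup B)=u(A)\cup u(B)$. The interior is $\mathrm{int}_u A=X\setminus u(X\setminus A)$; $U$ is a neighbourhood of $x$ if $x\in\mathrm{int}_uU$. A map $f:(X,u)\to(Y,v)$ is continuous if $f(u(A))\subset v(f(A))$ for all $A\subset X$. A net $(x_\mu)_{\mu\in M}$ converges to $x$ if for every neighbourhood $U$ of $x$ there is $\mu_0$ with $x_\mu\in U$ for all $\mu\ge\mu_0$. A net $(f_\lambda)_{\lambda\in\Lambda}$ in $Y^X$ converges continuously to $f\in Y^X$ if, whenever a net $(x_\mu)_{\mu\in M}$ converges to $x$ in $(X,u)$, the net $(f_\lambda(x_\mu))_{(\lambda,\mu)\in\Lambda\times M}$ (coordinatewise order) converges to $f(x)$ in $(Y,v)$. For a net $(A_\lambda)_{\lambda\in\Lambda}$ of subsets of $X$, its upper limit $\overline{\lim_{\Lambda}}A_\lambda$ is the set of all $x\in X$ such that for every $\lambda_0\in\Lambda$ and every neighbourhood $U$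 of $x$ there is $\lambda\ge\lambda_0$ with $A_\lambda\cap U\ne\emptyset$. *)

(* Defs.v *)
From Stdlib Require Import Classical FunctionalExtensionality PropExtensionality.

Set Implicit Arguments.

Definition set_union {X : Type} (A B : X -> Prop) : X -> Prop := fun x => A x \/ B x.
Definition set_compl {X : Type} (A : X -> Prop) : X -> Prop := fun x => ~ A x.

Record closure_space (X : Type) := ClosureSpace {
  cl : (X -> Prop) -> (X -> Prop);
  cl_empty : forall x, ~ cl (fun _ => False) x;
  cl_ext : forall A x, A x -> cl A x;
  cl_union : forall A B x, cl (set_union A B) x <-> (cl A x \/ cl B x)
}.

Definition interior {X} (u : closure_space X) (A : X -> Prop) : X -> Prop :=
  fun x => ~ cl u (set_compl A) x.
Definition nbhd {X} (u : closure_space X) (x : X) (U : X -> Prop) : Prop :=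
  interior u U x.

Definition image {X Y} (f : X -> Y) (A : X -> Prop) : Y -> Prop :=
  fun y => exists a, A a /\ y = f a.
Definition preimage {X Y} (f : X -> Y) (B : Y -> Prop) : X -> Prop :=
  fun x => B (f x).

Definition continuous {X Y} (u : closure_space X) (v : closure_space Y) (f : X -> Y) : Prop :=
  forall (A : X -> Prop) (x : X), cl u A x -> cl v (image f A) (f x).

Record directed {I : Type} (le : I -> I -> Prop) : Prop := Directed {
  dir_inhabited : inhabited I;
  dir_refl : forall i, le i i;
  dir_trans : forall i j k, le i j -> le j k -> le i k;
  dir_upper : forall i j, exists k, le i k /\ le j k
}.

Definition prod_le {I J : Type} (leI : I -> I -> Prop) (leJ : J -> J -> Prop)
  : (I * J) -> (I * J) -> Prop :=
  fun p q => leI (fst p) (fst q) /\ leJ (snd p) (snd q).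

Definition net_converges {X I : Type} (u : closure_space X) (le : I -> I -> Prop)
  (xs : I -> X) (p : X) : Prop :=
  forall U, nbhd u p U -> exists i0, forall i, le i0 i -> U (xs i).

Definition converges_continuously {X Y L : Type} (u : closure_space X) (v : closure_space Y)
  (leL : L -> L -> Prop) (fl : L -> X -> Y) (f : X -> Y) : Prop :=
  forall (M : Type) (leM : M -> M -> Prop) (xs : M -> X) (x : X),
    directed leM -> net_converges u leM xs x ->
    net_converges v (prod_le leL leM) (fun p => fl (fst p) (xs (snd p))) (f x).

Definition upper_limit {X L : Type} (u : closure_space X) (leL : L -> L -> Prop)
  (A : L -> X -> Prop) : X -> Prop :=
  fun x => forall l0 U, nbhd u x U -> exists l, leL l0 l /\ exists z, A l z /\ U z.

(* Main.v *)
Require Import Defs.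
From Stdlib Require Import Classical FunctionalExtensionality PropExtensionality IndefiniteDescription.

Lemma cl_mono {X} (u : closure_space X) (A B : X -> Prop) x :
  (forall z, A z -> B z) -> cl u A x -> cl u B x.
Proof.
  intros H HA.
  assert (E : B = set_union A B).
  { apply functional_extensionality; intro z; apply propositional_extensionality.
    unfold set_union; split; [now right|]. intros [h|h]; auto. }
  rewrite E. apply cl_union. now left.
Qed.

Lemma nbhd_in {X} (u : closure_space X) x U : nbhd u x U -> U x.
Proof.
  intros H. apply NNPP; intro Hn. apply H. apply cl_ext. exact Hn.
Qed.

Lemma nbhd_full {X} (u : closure_space X) x : nbhd u x (fun _ => True).
Proof.
  intro H. apply (cl_empty u x). revert H. apply cl_mono.
  intros z h. apply h. exact I.
Qed.

Lemma nbhd_inter {X} (u : closure_space X) x U1 U2 :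
  nbhd u x U1 -> nbhd u x U2 -> nbhd u x (fun z => U1 z /\ U2 z).
Proof.
  intros H1 H2 H.
  apply (cl_mono u _ (set_union (set_compl U1) (set_compl U2))) in H.
  - apply cl_union in H. destruct H; auto.
  - intros z h. unfold set_union, set_compl in *.
    destruct (classic (U1 z)); [right|left]; auto.
Qed.

Theorem theorem3 (X Y : Type) (u : closure_space X) (v : closure_space Y)
  (L : Type) (leL : L -> L -> Prop) (HL : directed leL)
  (fl : L -> X -> Y) (f : X -> Y)
  (Hfl : forall l, continuous u v (fl l)) (Hf : continuous u v f) :
  converges_continuously u v leL fl f <->
  (forall (B : Y -> Prop) (x : X),
     upper_limit u leL (fun l => preimage (fl l) B) x -> preimage f (cl v B) x).
Proof.
  split.
  - intros Hcc B x Hup. apply NNPP; intro Hn. unfold preimage in Hn.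
    set (M := (L * {U : X -> Prop | nbhd u x U})%type).
    assert (Hg : exists g : M -> L * X, forall m : M,
      leL (fst m) (fst (g m)) /\ B (fl (fst (g m)) (snd (g m)))
      /\ proj1_sig (snd m) (snd (g m))).
    { apply (functional_choice (fun (m : M) (p : L * X) =>
         leL (fst m) (fst p) /\ B (fl (fst p) (snd p)) /\ proj1_sig (snd m) (snd p))).
      intros [l0 [U HU]]. simpl.
      destruct (Hup l0 U HU) as [l [Hl [z [Bz Uz]]]].
      exists (l, z). simpl. auto. }
    destruct Hg as [g Hg].
    destruct HL as [[l_any] Hr Ht Hu].
    set (leM := fun (m m' : M) => leL (fst m) (fst m') /\
                  forall z, proj1_sig (snd m') z -> proj1_sig (snd m) z).
    assert (Hdir : directed leM).
    { constructor.
      - exact (inhabits (l_any, exist _ (fun _ => True) (nbhd_full u x))).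
      - intros i. split; auto.
      - intros i j k [h1 h2] [h3 h4]. split; eauto.
      - intros [l1 [U1 H1]] [l2 [U2 H2]].
        destruct (Hu l1 l2) as [l3 [h1 h2]].
        exists (l3, exist _ (fun z => U1 z /\ U2 z) (nbhd_inter u x U1 U2 H1 H2)).
        unfold leM; simpl. split; split; try tauto; intros z [? ?]; auto. }
    assert (Hconv : net_converges u leM (fun m => snd (g m)) x).
    { intros U HU. exists (l_any, exist _ U HU).
      intros [l' [U' HU']] [_ Hsub]. simpl in Hsub. apply Hsub.
      exact (proj2 (proj2 (Hg (l', exist _ U' HU')))). }
    assert (Hnb : nbhd v (f x) (set_compl B)).
    { intro H. apply Hn. revert H. apply cl_mono.
      intros z h. unfold set_compl in h. now apply NNPP. }
    destruct (Hcc M leM (fun m => snd (g m)) x Hdir Hconv _ Hnb)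
      as [[a0 [l0 U0]] H].
    destruct (Hu a0 l0) as [l1 [h1 h2]].
    set (m := (l1, U0) : M).
    specialize (H (fst (g m), m)).
    destruct (Hg m) as [g1 [g2 g3]].
    apply H; [|exact g2].
    unfold prod_le, leM; simpl. split; [eauto|]. split; auto.
  - intros Hc M leM xs x _ Hx V HV.
    apply NNPP; intro Hn.
    apply HV.
    apply (Hc (set_compl V) x).
    intros l0 U HU.
    destruct (Hx U HU) as [m0 Hm0].
    apply NNPP; intro Hn2. apply Hn.
    exists (l0, m0). intros [a m] [ha hm]. simpl in *.
    apply NNPP; intro Hv. apply Hn2.
    exists a. split; auto. exists (xs m). split; auto.
Qed.
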